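(* Let $k$ be an algebraically closed field of characteristic zero, $n\ge1$, $q\in k$ a primitive $2n$-th root of unity, $a\in k\setminus\{0\}$. Let $\mathfrak wH_{4n}$ be the algebra generated by $Z,X$ with relations $Z^{2n+1}=Z$, $ZX=qXZ$, $X^2=0$. Then $\mathfrak wH_{4n}$ is a noncommutative and noncocommutative weak Hopf algebra with comultiplication, counit and weak antipode $T$ determined by $\Delta(Z)=Z\otimes Z+a(1-q^{-2})Z^{n+1}X\otimes ZX$, $\Delta(X)=X\otimes 1+Z^n\otimes X$, $\epsilon(Z)=1$, $\epsilon(X)=0$, $T(Z)=Z^{2n-1}$, $T(X)=-Z^nX$ (with $\Delta,\epsilon$ algebra maps and $T$ an algebra anti-homomorphism).
   Context: A weak Hopf algebra (in the sense of Li) is a $k$-bialgebra $H$ together with a linear map $T\in\mathrm{Hom}(H,H)$ such that $T*\mathrm{id}*T=T$ and $\mathrm{id}*T*\mathrm{id}=\mathrm{id}$, where $*$ is the convolution product on $\mathrm{Hom}(H,H)$. *)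

(* Defs.v *)
From HB Require Import structures.
From mathcomp Require Import all_boot all_algebra.
Set Implicit Arguments. Unset Strict Implicit. Unset Printing Implicit Defensive.
Import GRing.Theory.
Local Open Scope ring_scope.

(* Finite-dimensional k-vector spaces with a chosen finite basis J, realised
   as k^J = {ffun J -> k}; tensor products V(J) (x) V(L) = V(J * L).          *)
Notation vec k J := {ffun J -> (GRing.Field.sort k)^o}.

Definition bvec (k : fieldType) (J : finType) (j : J) : vec k J :=
  [ffun x => (x == j)%:R].

Definition tens (k : fieldType) (J L : finType) (u : vec k J) (v : vec k L)
  : vec k (J * L)%type := [ffun p => u p.1 * v p.2].

Definition tmap (k : fieldType) (J L J' L' : finType)
  (f : vec k J -> vec k J') (g : vec k L -> vec k L') (w : vec k (J * L)%type)
  : vec k (J' * L')%type :=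
  \sum_(p : J * L) w p *: tens (f (bvec k p.1)) (g (bvec k p.2)).

(* bilinear product determined by structure constants c i j = e_i e_j *)
Definition smul (k : fieldType) (J : finType) (c : J -> J -> vec k J)
  (u v : vec k J) : vec k J :=
  \sum_(i : J) \sum_(j : J) (u i * v j) *: c i j.

Definition tconst (k : fieldType) (J : finType) (c : J -> J -> vec k J)
  (p p' : J * J) : vec k (J * J)%type := tens (c p.1 p'.1) (c p.2 p'.2).

Definition spow (k : fieldType) (J : finType) (c : J -> J -> vec k J)
  (one : vec k J) (u : vec k J) (m : nat) : vec k J :=
  iter m (smul c u) one.

Definition is_linear (k : fieldType) (J L : finType) (f : vec k J -> vec k L) :=
  forall (x : k) (u v : vec k J), f (x *: u + v) = x *: f u + f v.

Definition is_assoc_unital (k : fieldType) (J : finType)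
  (c : J -> J -> vec k J) (one : vec k J) :=
  [/\ forall u v w, smul c (smul c u v) w = smul c u (smul c v w),
      forall u, smul c one u = u &
      forall u, smul c u one = u].

Definition conv (k : fieldType) (J : finType) (c : J -> J -> vec k J)
  (Delta : vec k J -> vec k (J * J)%type) (f g : vec k J -> vec k J) (v : vec k J)
  : vec k J :=
  \sum_(p : J * J) Delta v p *: smul c (f (bvec k p.1)) (g (bvec k p.2)).

Definition is_bialgebra (k : fieldType) (J : finType)
  (c : J -> J -> vec k J) (one : vec k J)
  (Delta : vec k J -> vec k (J * J)%type) (eps : vec k J -> k) :=
  [/\ is_assoc_unital c one /\ is_linear Delta /\
        (forall (x : k) u v, eps (x *: u + v) = x * eps u + eps v),
      (forall v i j l,
          tmap Delta id (Delta v) ((i, j), l) = tmap id Delta (Delta v) (i, (j, l))),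
      (forall v, \sum_(p : J * J) (Delta v p * eps (bvec k p.1)) *: bvec k p.2 = v) /\
      (forall v, \sum_(p : J * J) (Delta v p * eps (bvec k p.2)) *: bvec k p.1 = v),
      (forall u v, Delta (smul c u v) = smul (tconst c) (Delta u) (Delta v)) /\
        Delta one = tens one one &
      (forall u v, eps (smul c u v) = eps u * eps v) /\ eps one = 1].

(* weak Hopf algebra in the sense of Li: T * id * T = T and id * T * id = id *)
Definition is_weak_hopf (k : fieldType) (J : finType)
  (c : J -> J -> vec k J) (one : vec k J)
  (Delta : vec k J -> vec k (J * J)%type) (eps : vec k J -> k)
  (T : vec k J -> vec k J) :=
  [/\ is_bialgebra c one Delta eps,
      is_linear T,
      (forall v, conv c Delta (conv c Delta T id) T v = T v) &
      (forall v, conv c Delta (conv c Delta id T) id v = v)].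

(* The algebra wH_{4n}: basis Z^i X^j, 0 <= i <= 2n, j in {0,1}
   (Z^0 = 1), multiplication from Z^{2n+1} = Z, X Z = q^{-1} Z X, X^2 = 0.   *)
Definition wI (n : nat) : finType := ('I_(n.*2.+1) * bool)%type.

(* reduction of exponents of Z using Z^{2n+1} = Z *)
Definition zred (n e : nat) : nat := if (e <= n.*2)%N then e else (e - n.*2)%N.

(* (Z^i X^j)(Z^l X^m) = q^{-jl} Z^{i+l} X^{j+m} *)
Definition wmul (k : fieldType) (n : nat) (q : k) (x y : wI n) : vec k (wI n) :=
  if x.2 && y.2 then 0
  else q ^- (x.2 * y.1)%N *: bvec k (inord (zred n (x.1 + y.1)) : 'I_(n.*2.+1), x.2 || y.2).

Definition wmon (k : fieldType) (n i : nat) (j : bool) : vec k (wI n) :=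
  bvec k (inord i : 'I_(n.*2.+1), j).

Definition wone (k : fieldType) (n : nat) := wmon k n 0 false.
Definition wZ (k : fieldType) (n : nat) := wmon k n 1 false.
Definition wX (k : fieldType) (n : nat) := wmon k n 0 true.

Definition is_alg_morph (k : fieldType) (J : finType)
  (c : J -> J -> vec k J) (one : vec k J) (B : algType k) (f : vec k J -> B) :=
  [/\ forall (x : k) u v, f (x *: u + v) = x *: f u + f v,
      forall u v, f (smul c u v) = f u * f v &
      f one = 1].

(* Main.v *)
Require Import Defs.
From HB Require Import structures.
From mathcomp Require Import all_boot all_algebra.
From mathcomp Require Import zify ring.
Set Implicit Arguments. Unset Strict Implicit. Unset Printing Implicit Defensive.
Import GRing.Theory.
Local Open Scope ring_scope.

Section Generic.
Variables (k : fieldType) (J : finType).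

Definition lin (V : lmodType k) (f : vec k J -> V) :=
  forall (x : k) (u v : vec k J), f (x *: u + v) = x *: f u + f v.

Section LinV.
Variables (V : lmodType k) (f : vec k J -> V) (hf : lin f).

Lemma lin0 : f 0 = 0.
Proof.
have h := hf 1 0 0; rewrite !scale1r addr0 in h.
by apply: (addrI (f 0)); rewrite addr0 -h.
Qed.

Lemma linZ x u : f (x *: u) = x *: f u.
Proof. by rewrite -[x *: u]addr0 hf lin0 addr0. Qed.

Lemma linD u v : f (u + v) = f u + f v.
Proof. by have := hf 1 u v; rewrite !scale1r. Qed.

Lemma lin_sum (I : Type) (r : seq I) (P : pred I) (F : I -> vec k J) :
  f (\sum_(i <- r | P i) F i) = \sum_(i <- r | P i) f (F i).
Proof. exact: (big_morph f linD lin0). Qed.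
End LinV.

Lemma bvecE (j x : J) : bvec k j x = (x == j)%:R.
Proof. by rewrite ffunE. Qed.

Lemma vec_expand (u : vec k J) : u = \sum_j u j *: bvec k j.
Proof.
apply/ffunP => x; rewrite sum_ffunE (bigD1 x) //= !ffunE eqxx big1 ?addr0.
  by rewrite [_ *: _]mulr1.
by move=> j /negbTE hj; rewrite !ffunE eq_sym hj [_ *: _]mulr0.
Qed.

Lemma lin_expand (V : lmodType k) (f : vec k J -> V) : lin f ->
  forall u, f u = \sum_j u j *: f (bvec k j).
Proof.
move=> hf u; rewrite {1}(vec_expand u) lin_sum //.
by apply: eq_bigr => j _; rewrite linZ.
Qed.

Lemma lin_ext (V : lmodType k) (f g : vec k J -> V) : lin f -> lin g ->
  (forall j, f (bvec k j) = g (bvec k j)) -> forall u, f u = g u.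
Proof.
move=> hf hg e u; rewrite (lin_expand hf) (lin_expand hg).
by apply: eq_bigr => j _; rewrite e.
Qed.

Definition linext (V : lmodType k) (F : J -> V) (v : vec k J) : V :=
  \sum_j v j *: F j.

Lemma linext_lin (V : lmodType k) (F : J -> V) : lin (linext F).
Proof.
move=> x u v; rewrite /linext scaler_sumr -big_split /=.
by apply: eq_bigr => j _; rewrite !ffunE scalerDl scalerA.
Qed.

Lemma linext_bvec (V : lmodType k) (F : J -> V) j : linext F (bvec k j) = F j.
Proof.
rewrite /linext (bigD1 j) //= ffunE eqxx scale1r big1 ?addr0 //.
by move=> i /negbTE hi; rewrite ffunE hi scale0r.
Qed.

Lemma lin_comp (L : finType) (V : lmodType k) (f : vec k J -> vec k L)
   (g : vec k L -> V) : lin f -> (forall x u v, g (x *: u + v) = x *: g u + g v) ->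
   lin (fun v => g (f v)).
Proof. by move=> hf hg x u v; rewrite hf hg. Qed.

Lemma bilin_ext (V : lmodType k) (F G : vec k J -> vec k J -> V) :
  (forall v, lin (F^~ v)) -> (forall u, lin (F u)) ->
  (forall v, lin (G^~ v)) -> (forall u, lin (G u)) ->
  (forall i j, F (bvec k i) (bvec k j) = G (bvec k i) (bvec k j)) ->
  forall u v, F u v = G u v.
Proof.
move=> F1 F2 G1 G2 e u v.
apply: (lin_ext (F1 v) (G1 v)) => i.
by apply: (lin_ext (F2 _) (G2 _)) => j.
Qed.

Variable (c : J -> J -> vec k J).

Lemma smul_linl v : lin (fun u => smul c u v).
Proof.
move=> x u w; rewrite /smul scaler_sumr -big_split; apply: eq_bigr => i _ /=.
rewrite scaler_sumr -big_split; apply: eq_bigr => j _ /=.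
by rewrite !ffunE scalerA -scalerDl; congr (_ *: _); rewrite /GRing.scale /=; ring.
Qed.

Lemma smul_linr u : lin (smul c u).
Proof.
move=> x v w; rewrite /smul scaler_sumr -big_split; apply: eq_bigr => i _ /=.
rewrite scaler_sumr -big_split; apply: eq_bigr => j _ /=.
by rewrite !ffunE scalerA -scalerDl; congr (_ *: _); rewrite /GRing.scale /=; ring.
Qed.

Lemma smul_bvec i j : smul c (bvec k i) (bvec k j) = c i j.
Proof.
rewrite /smul (bigD1 i) //= [X in _ + X]big1 ?addr0; last first.
  move=> i' /negbTE hi; apply: big1 => j' _.
  by rewrite !ffunE hi mul0r scale0r.
rewrite (bigD1 j) //= [X in _ + X]big1 ?addr0; last first.
  by move=> j' /negbTE hj; rewrite !ffunE hj mulr0 scale0r.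
by rewrite !ffunE !eqxx mulr1 scale1r.
Qed.

End Generic.

Section Generic2.
Variables (k : fieldType) (J L : finType).

Lemma natr_and (b1 b2 : bool) : ((b1 && b2)%:R : k) = b1%:R * b2%:R.
Proof. by case: b1; case: b2; rewrite ?mulr1 ?mulr0 ?mul0r. Qed.

Lemma tens_bvec (x : J) (y : L) : tens (bvec k x) (bvec k y) = bvec k (x, y).
Proof.
apply/ffunP => -[i j]; rewrite !ffunE /= xpair_eqE.
by case: (i == x); case: (j == y); rewrite ?mulr1 ?mulr0 ?mul0r.
Qed.

Lemma tensZl x (u : vec k J) (v : vec k L) : tens (x *: u) v = x *: tens u v.
Proof. by apply/ffunP => p; rewrite !ffunE; exact: (esym (mulrA _ _ _)). Qed.
Lemma tensZr x (u : vec k J) (v : vec k L) : tens u (x *: v) = x *: tens u v.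
Proof. by apply/ffunP => p; rewrite !ffunE; exact: mulrCA. Qed.
Lemma tensDl (u u' : vec k J) (v : vec k L) : tens (u + u') v = tens u v + tens u' v.
Proof. by apply/ffunP => p; rewrite !ffunE mulrDl. Qed.
Lemma tensDr (u : vec k J) (v v' : vec k L) : tens u (v + v') = tens u v + tens u v'.
Proof. by apply/ffunP => p; rewrite !ffunE mulrDr. Qed.
Lemma tens0l (v : vec k L) : tens (0 : vec k J) v = 0.
Proof. by apply/ffunP => p; rewrite !ffunE mul0r. Qed.
Lemma tens0r (u : vec k J) : tens u (0 : vec k L) = 0.
Proof. by apply/ffunP => p; rewrite !ffunE mulr0. Qed.

Variable (c : J -> J -> vec k J).
Lemma gsmulZl x u v : smul c (x *: u) v = x *: smul c u v.
Proof. exact: (linZ (smul_linl _ _)). Qed.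
Lemma gsmulZr x u v : smul c u (x *: v) = x *: smul c u v.
Proof. exact: (linZ (smul_linr _ _)). Qed.
Lemma gsmul0l v : smul c 0 v = 0.
Proof. exact: (lin0 (smul_linl _ _)). Qed.
Lemma gsmul0r v : smul c v 0 = 0.
Proof. exact: (lin0 (smul_linr _ _)). Qed.
Lemma gsmulDl u u' v : smul c (u + u') v = smul c u v + smul c u' v.
Proof. exact: (linD (smul_linl _ _)). Qed.
Lemma gsmulDr u v v' : smul c u (v + v') = smul c u v + smul c u v'.
Proof. exact: (linD (smul_linr _ _)). Qed.

End Generic2.

Section Tmap.
Variables (k : fieldType) (J L J' L' : finType).
Variables (f : vec k J -> vec k J') (g : vec k L -> vec k L').
Lemma tmapD u v : tmap f g (u + v) = tmap f g u + tmap f g v.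
Proof. exact: (linD (linext_lin _)). Qed.
Lemma tmapZ x u : tmap f g (x *: u) = x *: tmap f g u.
Proof. exact: (linZ (linext_lin _)). Qed.
Lemma tmap_bvec p : tmap f g (bvec k p) = tens (f (bvec k p.1)) (g (bvec k p.2)).
Proof. exact: linext_bvec. Qed.
End Tmap.

Section LinextG.
Variables (k : fieldType) (J : finType) (U : lmodType k) (F : J -> U).
Lemma gleD u v : linext F (u + v) = linext F u + linext F v.
Proof. exact: (linD (linext_lin _)). Qed.
Lemma gleZ x u : linext F (x *: u) = x *: linext F u.
Proof. exact: (linZ (linext_lin _)). Qed.
Lemma gle0 : linext F 0 = 0.
Proof. exact: (lin0 (linext_lin _)). Qed.
End LinextG.

Section VecE.
Variables (k : fieldType) (J L : finType).
Lemma vaddE (u v : vec k J) p : (u + v) p = u p + v p.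
Proof. by rewrite ffunE. Qed.
Lemma vscaleE x (u : vec k J) p : (x *: u) p = x * u p.
Proof. by rewrite ffunE. Qed.
Lemma v0E p : (0 : vec k J) p = 0.
Proof. by rewrite ffunE. Qed.
Lemma tensE (u : vec k J) (v : vec k L) p : tens u v p = u p.1 * v p.2.
Proof. by rewrite ffunE. Qed.
End VecE.

Ltac splitif := repeat match goal with
 | |- context[if ?c then _ else _] =>
     lazymatch c with context[if _ then _ else _] => fail | _ => case: (boolP c) => ? end
 end.

Section Wh.
Variables (k : fieldType) (n : nat) (q a : k).
Hypothesis hn : (0 < n)%N.
Hypothesis hq : (n.*2).-primitive_root q.

Local Notation N := (n.*2.+1).
Local Notation V := (vec k (wI n)).
Local Notation c := (@wmul k n q).

Definition texp (i : nat) : nat :=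
  if i == 0%N then 0%N else if i == n.*2 then n.*2 else (n.*2 - i)%N.

Ltac bnd0 := (try rewrite /zred); (try rewrite /texp); splitif; lia.
Ltac bnd := lazymatch goal with
 | |- is_true (leq _ _) => bnd0
 | |- @eq nat _ _ => bnd0
 end.

Definition w (i : nat) (b : bool) : wI n := (inord i, b).

Lemma wmonE i b : wmon k n i b = bvec k (w i b).
Proof. by []. Qed.

Lemma w_val (s : wI n) : s = w s.1 s.2.
Proof. by case: s => i b; rewrite /w inord_val. Qed.

Lemma w1 i b : (i < N)%N -> ((w i b).1 : nat) = i.
Proof. by move=> h; rewrite /= inordK. Qed.

Lemma wP (P : wI n -> Prop) : (forall i b, (i < N)%N -> P (w i b)) -> forall s, P s.
Proof. by move=> h s; rewrite (w_val s); apply: h. Qed.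

Lemma smulE i b l d : (i < N)%N -> (l < N)%N ->
  smul c (wmon k n i b) (wmon k n l d) =
  if b && d then 0 else q ^- (b * l) *: wmon k n (zred n (i + l)) (b || d).
Proof. by move=> hi hl; rewrite !wmonE smul_bvec /wmul !w1. Qed.

Lemma smulFF i l : (i < N)%N -> (l < N)%N ->
  smul c (wmon k n i false) (wmon k n l false) = wmon k n (zred n (i + l)) false.
Proof. by move=> hi hl; rewrite smulE //= mul0n expr0 invr1 scale1r. Qed.
Lemma smulFT i l : (i < N)%N -> (l < N)%N ->
  smul c (wmon k n i false) (wmon k n l true) = wmon k n (zred n (i + l)) true.
Proof. by move=> hi hl; rewrite smulE //= mul0n expr0 invr1 scale1r. Qed.
Lemma smulTF i l : (i < N)%N -> (l < N)%N ->
  smul c (wmon k n i true) (wmon k n l false) = q ^- l *: wmon k n (zred n (i + l)) true.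
Proof. by move=> hi hl; rewrite smulE //= mul1n. Qed.
Lemma smulTT i l : (i < N)%N -> (l < N)%N ->
  smul c (wmon k n i true) (wmon k n l true) = 0.
Proof. by move=> hi hl; rewrite smulE. Qed.

Lemma smulZl x u v : smul c (x *: u) v = x *: smul c u v.
Proof. exact: (linZ (smul_linl _ _)). Qed.
Lemma smulZr x u v : smul c u (x *: v) = x *: smul c u v.
Proof. exact: (linZ (smul_linr _ _)). Qed.
Lemma smul0l v : smul c 0 v = 0.
Proof. exact: (lin0 (smul_linl _ _)). Qed.
Lemma smul0r v : smul c v 0 = 0.
Proof. exact: (lin0 (smul_linr _ _)). Qed.
Lemma smulDl u u' v : smul c (u + u') v = smul c u v + smul c u' v.
Proof. exact: (linD (smul_linl _ _)). Qed.
Lemma smulDr u v v' : smul c u (v + v') = smul c u v + smul c u v'.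
Proof. exact: (linD (smul_linr _ _)). Qed.

Lemma q2n : q ^+ n.*2 = 1.
Proof. exact: prim_expr_order. Qed.

Lemma qneq0 : q != 0.
Proof. by rewrite (prim_root_eq0 hq) double_eq0 -lt0n hn. Qed.

Lemma qn : q ^+ n = -1.
Proof.
have h1 : (q ^+ n) ^+ 2 == 1 by rewrite -exprM muln2 q2n.
have h2 : q ^+ n != 1.
  rewrite -(expr0 q) (eq_prim_root_expr hq) mod0n modn_small //; first by rewrite -lt0n.
  by rewrite -addnn -[X in (X < _)%N]addn0 ltn_add2l.
by move: h1; rewrite sqrf_eq1 (negbTE h2) /= => /eqP.
Qed.

Lemma qz e : q ^+ zred n e = q ^+ e.
Proof.
rewrite /zred; case: ifP => // /negbT; rewrite -ltnNge => h.
by rewrite -{2}(subnK (ltnW h)) exprD q2n mulr1.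
Qed.

Lemma qshift m A B : A = (B + m * n.*2)%N -> q ^+ A = q ^+ B.
Proof. by move=> ->; rewrite exprD mulnC exprM q2n expr1n mulr1. Qed.

Lemma qshiftE A B :
  (A = B \/ A = (B + n.*2)%N \/ B = (A + n.*2)%N \/ A = (B + 4 * n)%N \/ B = (A + 4 * n)%N) ->
  q ^+ A = q ^+ B.
Proof.
case=> [->|[->|[->|[->|->]]]].
- by [].
- by apply: (@qshift 1%N); lia.
- by symmetry; apply: (@qshift 1%N); lia.
- by apply: (@qshift 2%N); lia.
- by symmetry; apply: (@qshift 2%N); lia.
Qed.

Ltac qeq := apply: qshiftE; (try rewrite /zred); (try rewrite /texp); splitif; lia.

Lemma qinv_eq A B : q ^+ A = q ^+ B -> q ^- A = q ^- B.
Proof. by move=> ->. Qed.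

Lemma qVM A B : q ^- A * q ^- B = q ^- (A + B).
Proof. by rewrite exprD invfM. Qed.

Lemma wmon_congr e e' b x y : e = e' -> x = y -> x *: wmon k n e b = y *: wmon k n e' b.
Proof. by move=> -> ->. Qed.

Lemma wmon_congr0 e e' b : e = e' -> wmon k n e b = wmon k n e' b.
Proof. by move=> ->. Qed.

Lemma smul_assoc u v x :
  smul c (smul c u v) x = smul c u (smul c v x).
Proof.
move: u v; refine (@bilin_ext k (wI n) _ (fun u v => smul c (smul c u v) x)
  (fun u v => smul c u (smul c v x)) _ _ _ _ _).
1-4: by move=> ? ? ? ?; rewrite ?(smulDl, smulZl, smulDr, smulZr).
move=> s t; move: x; refine (@lin_ext k (wI n) _ (fun x => smul c (smul c (bvec k s) (bvec k t)) x)
  (fun x => smul c (bvec k s) (smul c (bvec k t) x)) _ _ _).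
1-2: by move=> ? ? ?; rewrite ?(smulDl, smulZl, smulDr, smulZr).
move=> r; rewrite !smul_bvec.
move: s t r; apply: wP => i b hi; apply: wP => l d hl; apply: wP => m e hm.
rewrite /wmul !w1 //.
case: b; case: d; case: e => /=;
  rewrite ?smul0l ?smul0r ?smulZl ?smulZr -?wmonE ?smulFF ?smulFT ?smulTF ?smulTT ?scaler0 //;
  try bnd; rewrite ?mul0n ?mul1n ?expr0 ?invr1 ?scale1r ?scalerA.
all: first [apply: wmon_congr0; bnd | apply: wmon_congr; [bnd| rewrite ?qVM; apply: qinv_eq; qeq]].
Qed.


Lemma linextD (U : lmodType k) (F : wI n -> U) u v : linext F (u + v) = linext F u + linext F v.
Proof. exact: (linD (linext_lin F)). Qed.
Lemma linextZ (U : lmodType k) (F : wI n -> U) x u : linext F (x *: u) = x *: linext F u.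
Proof. exact: (linZ (linext_lin F)). Qed.
Lemma linext0 (U : lmodType k) (F : wI n -> U) : linext F 0 = 0.
Proof. exact: (lin0 (linext_lin F)). Qed.

Lemma smul_one1 u : smul c (wone k n) u = u.
Proof.
move: u; refine (@lin_ext k (wI n) _ (fun u => smul c (wone k n) u) id _ _ _).
- by move=> ? ? ?; rewrite ?(smulDl, smulZl, smulDr, smulZr).
- by [].
apply: wP => i b hi /=; rewrite -wmonE /wone smulE //= mul0n expr0 invr1 scale1r.
by apply: wmon_congr0; bnd.
Qed.

Lemma smul_one2 u : smul c u (wone k n) = u.
Proof.
move: u; refine (@lin_ext k (wI n) _ (fun u => smul c u (wone k n)) id _ _ _).
- by move=> ? ? ?; rewrite ?(smulDl, smulZl, smulDr, smulZr).
- by [].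
apply: wP => i b hi /=; rewrite -wmonE /wone smulE //= andbF muln0 expr0 invr1 scale1r orbF.
by apply: wmon_congr0; bnd.
Qed.

Lemma spowZ m : (m <= n.*2)%N -> spow c (wone k n) (wZ k n) m = wmon k n m false.
Proof.
elim: m => [//|m IH] hm.
rewrite /spow iterS -/(spow _ _ _ _) IH; last lia.
by rewrite /wZ smulFF; [apply: wmon_congr0 | |]; bnd.
Qed.

Lemma spowZ2 : spow c (wone k n) (wZ k n) (n.*2.+1) = wZ k n.
Proof.
rewrite /spow iterS -/(spow _ _ _ _) spowZ //.
by rewrite /wZ smulFF; [apply: wmon_congr0 | |]; bnd.
Qed.

Lemma qneq1 : q ^- 1 != 1.
Proof.
apply/negP => /eqP h; have : q ^+ 1 == q ^+ 0.
  by rewrite expr0 -[q ^+ 1]invrK h invr1.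
rewrite (eq_prim_root_expr hq) mod0n modn_small //; lia.
Qed.

Section Univ.
Variables (B : algType k) (z x : B).
Hypotheses (hz : z ^+ (n.*2.+1) = z) (hzx : z * x = q *: (x * z)) (hx : x ^+ 2 = 0).

Definition uf := linext (fun s : wI n => z ^+ s.1 * x ^+ s.2).

Lemma zz e : z ^+ zred n e = z ^+ e.
Proof.
rewrite /zred; case: ifP => // /negbT; rewrite -ltnNge => h.
have -> : e = ((e - n.*2.+1) + n.*2.+1)%N by lia.
rewrite exprD hz -exprSr; congr (z ^+ _); lia.
Qed.

Lemma xz l : x * z ^+ l = q ^- l *: (z ^+ l * x).
Proof.
elim: l => [|l IH]; first by rewrite expr0 invr1 scale1r mulr1 mul1r.
have h1 : x * z = q^-1 *: (z * x).
  by rewrite hzx scalerA mulVf ?qneq0 // scale1r.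
rewrite {1}exprS mulrA h1 -scalerAl -mulrA IH -scalerAr scalerA mulrA -exprS.
by rewrite [q ^+ l.+1]exprS invfM.
Qed.

Lemma uf_bvec i b : (i < N)%N -> uf (wmon k n i b) = z ^+ i * x ^+ b.
Proof. by move=> hi; rewrite wmonE /uf linext_bvec w1. Qed.

Lemma uf_mul u v : uf (smul c u v) = uf u * uf v.
Proof.
move: u v; refine (@bilin_ext k (wI n) _ (fun u v => uf (smul c u v)) (fun u v => uf u * uf v)
  _ _ _ _ _).
1-2: by move=> ? ? ? ?; rewrite ?(smulDl, smulZl, smulDr, smulZr) /uf ?linextD ?linextZ.
1-2: by move=> ? ? ? ?; rewrite /uf ?linextD ?linextZ ?mulrDl ?mulrDr -?scalerAl -?scalerAr.
apply: wP => i b hi; apply: wP => l d hl; rewrite -!wmonE smulE // !uf_bvec //.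
have ufZ y u : uf (y *: u) = y *: uf u by rewrite /uf linextZ.
have uf0 : uf 0 = 0 by rewrite /uf linext0.
case: b; case: d => /=; rewrite ?mul1n ?mul0n ?expr0 ?invr1 ?scale1r ?expr1 ?mulr1 ?uf0 ?ufZ ?uf_bvec ?zz ?expr1 ?expr0 ?mulr1; try bnd.
- rewrite mulrA -[z ^+ i * x * z ^+ l]mulrA xz -scalerAr -scalerAl -!mulrA.
  by rewrite -[x * x]expr2 hx !mulr0 scaler0.
- by rewrite -mulrA xz -scalerAr mulrA -exprD.
- by rewrite mulrA -exprD.
- by rewrite exprD.
Qed.

Lemma univ : exists f : vec k (wI n) -> B,
  [/\ is_alg_morph c (wone k n) f, f (wZ k n) = z, f (wX k n) = x &
     forall g : vec k (wI n) -> B,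
       is_alg_morph c (wone k n) g -> g (wZ k n) = z -> g (wX k n) = x ->
       forall v, g v = f v].
Proof.
exists uf; split.
- split; first exact: linext_lin.
    exact: uf_mul.
  by rewrite /wone uf_bvec //= !expr0 mulr1.
- by rewrite /wZ uf_bvec /= ?expr0 ?expr1 ?mulr1 //; lia.
- by rewrite /wX uf_bvec //= expr0 expr1 mul1r.
move=> g [gl gm g1] gZ gX; apply: (@lin_ext k (wI n) B g uf gl (linext_lin _)).
apply: wP => i b hi; rewrite -wmonE uf_bvec //.
have hs m : g (spow c (wone k n) (wZ k n) m) = z ^+ m.
  elim: m => [|m IH]; first by rewrite expr0 g1.
  by rewrite /spow iterS -/(spow _ _ _ _) gm IH gZ exprS.
have gF : g (wmon k n i false) = z ^+ i by rewrite -spowZ ?hs //; lia.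
case: b; last by rewrite gF expr0 mulr1.
have -> : wmon k n i true = smul c (wmon k n i false) (wmon k n 0 true).
  by rewrite smulFT //; apply: wmon_congr0; bnd.
by rewrite gm gF expr1 -gX.
Qed.

End Univ.

Definition alpha (i : nat) : k := a * (1 - q ^- (2 * i)).

Definition Dl (s : wI n) : vec k (wI n * wI n)%type :=
  let i := nat_of_ord s.1 in
  if s.2 then bvec k (w i true, w i false) + bvec k (w (zred n (i + n)) false, w i true)
  else bvec k (w i false, w i false) + alpha i *: bvec k (w (zred n (i + n)) true, w i true).

Definition Delta := linext Dl.

Lemma DeltaF i : (i < N)%N -> Delta (wmon k n i false) =
  bvec k (w i false, w i false) + alpha i *: bvec k (w (zred n (i + n)) true, w i true).
Proof. by move=> hi; rewrite wmonE /Delta linext_bvec /Dl w1. Qed.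

Lemma DeltaT i : (i < N)%N -> Delta (wmon k n i true) =
  bvec k (w i true, w i false) + bvec k (w (zred n (i + n)) false, w i true).
Proof. by move=> hi; rewrite wmonE /Delta linext_bvec /Dl w1. Qed.

Lemma alpha0 : alpha 0 = 0.
Proof. by rewrite /alpha muln0 expr0 invr1 subrr mulr0. Qed.

Lemma alpha_n i : alpha (zred n (i + n)) = alpha i.
Proof. by rewrite /alpha; congr (_ * (_ - _)); apply: qinv_eq; qeq. Qed.

Lemma scale_reg (x y : k) : x *: (y : k^o) = x * y.
Proof. by []. Qed.



Lemma DeltaD u v : Delta (u + v) = Delta u + Delta v.
Proof. exact: linextD. Qed.
Lemma DeltaZ x u : Delta (x *: u) = x *: Delta u.
Proof. exact: linextZ. Qed.

Lemma pe2 (i j x y : wI n) : ((i, j) == (x, y)) = (i == x) && (j == y).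
Proof. exact: xpair_eqE. Qed.

Lemma na2 (i j x y : wI n) : (((i == x) && (j == y))%:R : k) = (i == x)%:R * (j == y)%:R.
Proof. exact: natr_and. Qed.

Lemma wfold x b : (inord x, b) = w x b.
Proof. by []. Qed.

Lemma coassoc v i j l :
  tmap Delta id (Delta v) ((i, j), l) = tmap id Delta (Delta v) (i, (j, l)).
Proof.
move: v; refine (@lin_ext k (wI n) k^o (fun v => tmap Delta id (Delta v) ((i, j), l))
  (fun v => tmap id Delta (Delta v) (i, (j, l))) _ _ _).
1-2: by move=> x u v /=; rewrite DeltaD DeltaZ tmapD tmapZ !ffunE.
apply: wP => m b hm; rewrite -wmonE.
case: b; rewrite ?DeltaF ?DeltaT // !tmapD ?tmapZ !tmap_bvec; cbn [fst snd]; rewrite -!wmonE ?DeltaF ?DeltaT //; try bnd.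
all: rewrite !(vaddE, vscaleE, v0E, bvecE, tensE).
all: cbn [fst snd].
all: rewrite !pe2.
all: rewrite !na2.
all: rewrite ?scale_reg.
all: rewrite !wfold.
all: rewrite ?alpha_n.
all: case: (m =P 0%N) => [->|hm0]; first by rewrite alpha0; ring.
all: have -> : zred n (zred n (m + n) + n) = m by bnd.
all: ring.
Qed.

Definition eps := linext (fun s : wI n => ((~~ s.2)%:R : k^o)).

Lemma eps_w i b : eps (wmon k n i b) = (~~ b)%:R.
Proof. by rewrite wmonE /eps linext_bvec. Qed.

Lemma counit_l v :
  \sum_(p : wI n * wI n) (Delta v p * eps (bvec k p.1)) *: bvec k p.2 = v.
Proof.
have E (W : vec k (wI n * wI n)%type) : \sum_(p : wI n * wI n) (W p * eps (bvec k p.1)) *: bvec k p.2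
   = linext (fun p : wI n * wI n => eps (bvec k p.1) *: bvec k p.2) W.
  by apply: eq_bigr => p _; rewrite scalerA.
rewrite E; move: v.
refine (@lin_ext k (wI n) _ (fun v => linext (fun p : wI n * wI n => eps (bvec k p.1) *: bvec k p.2) (Delta v)) id _ _ _).
- by move=> x u v /=; rewrite DeltaD DeltaZ gleD gleZ.
- by [].
apply: wP => m b hm; rewrite -wmonE /=.
case: b; rewrite ?DeltaF ?DeltaT // !gleD ?gleZ !linext_bvec; cbn [fst snd].
all: rewrite -!wmonE !eps_w /= ?scale1r ?scale0r ?scaler0 ?addr0 ?add0r //.
Qed.

Lemma counit_r v :
  \sum_(p : wI n * wI n) (Delta v p * eps (bvec k p.2)) *: bvec k p.1 = v.
Proof.
have E (W : vec k (wI n * wI n)%type) : \sum_(p : wI n * wI n) (W p * eps (bvec k p.2)) *: bvec k p.1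
   = linext (fun p : wI n * wI n => eps (bvec k p.2) *: bvec k p.1) W.
  by apply: eq_bigr => p _; rewrite scalerA.
rewrite E; move: v.
refine (@lin_ext k (wI n) _ (fun v => linext (fun p : wI n * wI n => eps (bvec k p.2) *: bvec k p.1) (Delta v)) id _ _ _).
- by move=> x u v /=; rewrite DeltaD DeltaZ gleD gleZ.
- by [].
apply: wP => m b hm; rewrite -wmonE /=.
case: b; rewrite ?DeltaF ?DeltaT // !gleD ?gleZ !linext_bvec; cbn [fst snd].
all: rewrite -!wmonE !eps_w /= ?scale1r ?scale0r ?scaler0 ?addr0 ?add0r //.
Qed.

Lemma cE i b l d : (i < N)%N -> (l < N)%N ->
  c (w i b) (w l d) =
  if b && d then 0 else q ^- (b * l) *: wmon k n (zred n (i + l)) (b || d).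
Proof. by move=> hi hl; rewrite -smul_bvec -!wmonE smulE. Qed.

Lemma alpha_add i l : alpha (zred n (i + l)) = alpha l + alpha i * (q ^- l * q ^- l).
Proof.
rewrite /alpha qVM.
have -> : q ^- (2 * zred n (i + l)) = q ^- (2 * i) * q ^- (2 * l).
  by rewrite qVM; apply: qinv_eq; qeq.
have -> : (l + l = 2 * l)%N by lia.
ring.
Qed.

Lemma qzn l : q ^- zred n (l + n) = - q ^- l.
Proof. by rewrite qz exprD qn mulrN1 invrN. Qed.

Lemma Delta0 : Delta 0 = 0.
Proof. exact: gle0. Qed.

Lemma Delta_mul u v :
  Delta (smul c u v) = smul (tconst c) (Delta u) (Delta v).
Proof.
move: u v; refine (@bilin_ext k (wI n) _ (fun u v => Delta (smul c u v))
  (fun u v => smul (tconst c) (Delta u) (Delta v)) _ _ _ _ _).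
1-2: by move=> ? ? ? ? /=; rewrite ?(smulDl, smulZl, smulDr, smulZr) DeltaD DeltaZ.
1-2: by move=> ? ? ? ? /=; rewrite DeltaD DeltaZ ?(gsmulDl, gsmulZl, gsmulDr, gsmulZr).
apply: wP => i b hi; apply: wP => l d hl; rewrite smul_bvec cE // -!wmonE.
have E1 : zred n (i + zred n (l + n)) = zred n (zred n (i + l) + n) by bnd.
have E2 : zred n (zred n (i + n) + l) = zred n (zred n (i + l) + n) by bnd.
case: b; case: d; rewrite ?DeltaF ?DeltaT //;
  rewrite ?(gsmulDl, gsmulZl, gsmulDr, gsmulZr) !smul_bvec /tconst; cbn [fst snd];
  rewrite ?cE; try bnd; cbn [andb orb nat_of_bool].
all: rewrite ?mul0n ?mul1n ?expr0 ?invr1 ?scale1r ?Delta0 ?DeltaZ ?DeltaF ?DeltaT; try bnd.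
all: rewrite ?tens0l ?tens0r ?scaler0 ?addr0 ?add0r ?tensZl ?tensZr !wmonE ?tens_bvec.
all: rewrite ?E1 ?E2 ?qzn ?alpha_add.
all: first [ by rewrite scaleNr addNr | by rewrite scalerDr | by rewrite scaler0 addr0
  | by rewrite scalerDl addrA !scalerA mulrA ].
Qed.

Lemma eps_lin : lin eps.
Proof. exact: linext_lin. Qed.

Lemma eps0 : eps 0 = 0. Proof. exact: gle0. Qed.
Lemma epsZ x u : eps (x *: u) = x *: eps u. Proof. exact: gleZ. Qed.

Lemma eps_mul u v : eps (smul c u v) = eps u * eps v.
Proof.
move: u v; refine (@bilin_ext k (wI n) k^o (fun u v => eps (smul c u v))
  (fun u v => (eps u * eps v : k^o)) _ _ _ _ _).
1-2: by move=> ? ? ? ? /=; rewrite ?(smulDl, smulZl, smulDr, smulZr) /eps gleD gleZ.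
1-2: by move=> ? ? ? ? /=; rewrite /eps !gleD !gleZ !scale_reg; ring.
apply: wP => i b hi; apply: wP => l d hl; rewrite /= smul_bvec cE // -!wmonE !eps_w.
by case: b; case: d; rewrite /= ?eps0 ?epsZ ?eps_w /= ?scale_reg ?mul0n ?expr0 ?invr1 ?mulr0 ?mul0r ?mulr1.
Qed.

Definition Tl (s : wI n) : vec k (wI n) :=
  let i := nat_of_ord s.1 in
  if s.2 then (- q ^- (texp i)) *: wmon k n (zred n (n + texp i)) true
  else wmon k n (texp i) false.

Definition T := linext Tl.

Lemma T_F i : (i < N)%N -> T (wmon k n i false) = wmon k n (texp i) false.
Proof. by move=> hi; rewrite wmonE /T linext_bvec /Tl w1. Qed.
Lemma T_T i : (i < N)%N -> T (wmon k n i true) =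
  (- q ^- (texp i)) *: wmon k n (zred n (n + texp i)) true.
Proof. by move=> hi; rewrite wmonE /T linext_bvec /Tl w1. Qed.
Lemma TD u v : T (u + v) = T u + T v. Proof. exact: gleD. Qed.
Lemma TZ x u : T (x *: u) = x *: T u. Proof. exact: gleZ. Qed.
Lemma T0 : T 0 = 0. Proof. exact: gle0. Qed.

Lemma smulNl u v : smul c (- u) v = - smul c u v.
Proof. by rewrite -scaleN1r smulZl scaleN1r. Qed.
Lemma smulNr u v : smul c u (- v) = - smul c u v.
Proof. by rewrite -scaleN1r smulZr scaleN1r. Qed.

Lemma T_anti u v : T (smul c u v) = smul c (T v) (T u).
Proof.
move: u v; refine (@bilin_ext k (wI n) _ (fun u v => T (smul c u v))
  (fun u v => smul c (T v) (T u)) _ _ _ _ _).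
1-2: by move=> ? ? ? ? /=; rewrite ?(smulDl, smulZl, smulDr, smulZr) TD TZ.
1-2: by move=> ? ? ? ? /=; rewrite TD TZ ?(smulDl, smulZl, smulDr, smulZr).
apply: wP => i b hi; apply: wP => l d hl; rewrite /= smul_bvec cE // -!wmonE.
case: b; case: d; rewrite /= ?T0 ?TZ ?T_F ?T_T ?smulZl ?smulZr ?smul0l ?smul0r; try bnd.
all: rewrite ?smulFF ?smulFT ?smulTF ?smulTT ?scaler0 ?smul0l ?smul0r //; try bnd.
all: rewrite ?mul0n ?mul1n ?expr0 ?invr1 ?scale1r ?scalerA.
all: first [apply: wmon_congr0; bnd | apply: wmon_congr; [bnd |
  rewrite ?mulrN ?mulNr ?qVM; congr (- _); apply: qinv_eq; qeq]].
Qed.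

Lemma convE (F G : vec k (wI n) -> vec k (wI n)) v : conv c Delta F G v =
  linext (fun p : wI n * wI n => smul c (F (bvec k p.1)) (G (bvec k p.2))) (Delta v).
Proof. by []. Qed.

Lemma conv_lin (F G : vec k (wI n) -> vec k (wI n)) : lin (conv c Delta F G).
Proof. by move=> x u v; rewrite !convE DeltaD DeltaZ gleD gleZ. Qed.

Lemma qone A : q ^+ A = q ^+ 0 -> q ^- A = 1.
Proof. by move=> ->; rewrite expr0 invr1. Qed.

Ltac csimp :=
  rewrite ?(smulDl, smulDr, smulZl, smulZr, smul0l, smul0r, smulNl, smulNr);
  rewrite ?smulFF ?smulFT ?smulTF ?smulTT; try bnd;
  rewrite ?mul0n ?mul1n ?expr0 ?invr1 ?scale1r ?(oppr0, scaler0, addr0, add0r) ?scalerA.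

Lemma HF x : (x < N)%N ->
  conv c Delta T id (wmon k n x false) = wmon k n (zred n (texp x + x)) false.
Proof.
move=> hx; rewrite convE DeltaF // gleD gleZ !linext_bvec; cbn [fst snd].
rewrite -!wmonE !(T_F, T_T); try bnd.
by csimp.
Qed.

Lemma HT x : (x < N)%N -> conv c Delta T id (wmon k n x true) = 0.
Proof.
move=> hx; rewrite convE DeltaT // gleD !linext_bvec; cbn [fst snd].
rewrite -!wmonE !(T_F, T_T); try bnd.
csimp.
have E : zred n (zred n (n + texp x) + x) = zred n (texp (zred n (x + n)) + x) by bnd.
rewrite E mulNr qVM qone; first by rewrite scaleN1r addNr.
qeq.
Qed.

Lemma KF x : (x < N)%N ->
  conv c Delta id T (wmon k n x false) = wmon k n (zred n (x + texp x)) false.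
Proof.
move=> hx; rewrite convE DeltaF // gleD gleZ !linext_bvec; cbn [fst snd].
rewrite -!wmonE !(T_F, T_T); try bnd.
by csimp.
Qed.

Lemma KT x : (x < N)%N -> conv c Delta id T (wmon k n x true) =
  q ^- (texp x) *: wmon k n (zred n (x + texp x)) true
  - q ^- (texp x) *: wmon k n (zred n (zred n (x + n) + zred n (n + texp x))) true.
Proof.
move=> hx; rewrite convE DeltaT // gleD !linext_bvec; cbn [fst snd].
rewrite -!wmonE !(T_F, T_T); try bnd.
by csimp; rewrite scaleNr.
Qed.

Lemma conv_TidT v : conv c Delta (conv c Delta T id) T v = T v.
Proof.
move: v; refine (@lin_ext k (wI n) _ _ T (conv_lin _ _) (linext_lin _) _).
apply: wP => m b hm; rewrite -wmonE convE.
case: b; rewrite ?DeltaF ?DeltaT // !gleD ?gleZ !linext_bvec; cbn [fst snd];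
  rewrite -!wmonE ?HF ?HT ?T_F ?T_T; try bnd.
all: csimp.
all: first [apply: wmon_congr0; bnd | apply: wmon_congr; [bnd | by []]].
Qed.

Lemma conv_idTid v : conv c Delta (conv c Delta id T) id v = v.
Proof.
move: v; refine (@lin_ext k (wI n) _ _ id (conv_lin _ _) _ _); first by [].
apply: wP => m b hm; rewrite -wmonE convE.
case: b; rewrite ?DeltaF ?DeltaT // !gleD ?gleZ !linext_bvec; cbn [fst snd];
  rewrite -!wmonE ?KF ?KT; try bnd.
all: csimp.
2: by apply: wmon_congr0; bnd.
case: (m =P 0%N) => [->|h0].
  have -> : zred n (zred n (0 + texp 0) + 0) = 0%N by bnd.
  have -> : zred n (zred n (zred n (0 + n) + zred n (n + texp 0)) + 0) = n.*2 by bnd.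
  have -> : zred n (zred n (zred n (0 + n) + texp (zred n (0 + n))) + 0) = n.*2 by bnd.
  have -> : texp 0 = 0%N by [].
  by rewrite !expr0 !invr1 ?mulr1 ?scale1r subrK.
have -> : zred n (zred n (m + texp m) + m) = m by bnd.
have -> : zred n (zred n (zred n (m + n) + zred n (n + texp m)) + m) = m by bnd.
have -> : zred n (zred n (zred n (m + n) + texp (zred n (m + n))) + m) = m by bnd.
by rewrite subrr add0r.
Qed.

Lemma weq i b l d : (i < N)%N -> (l < N)%N -> (w i b == w l d) = (i == l) && (b == d).
Proof.
move=> hi hl; rewrite /w xpair_eqE; congr (_ && _).
by rewrite -val_eqE /= !inordK.
Qed.

Lemma main_sec :
  let c := @wmul k n q in
  let one := wone k n in
  let Z := wZ k n in
  let X := wX k n in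
  let m := smul c in
  [/\ is_assoc_unital c one,
      spow c one Z (n.*2.+1) = Z /\ m Z X = q *: m X Z /\ m X X = 0,
      (forall (B : algType k) (z x : B),
          z ^+ (n.*2.+1) = z -> z * x = q *: (x * z) -> x ^+ 2 = 0 ->
          exists f : vec k (wI n) -> B,
            [/\ is_alg_morph c one f, f Z = z, f X = x &
                forall g : vec k (wI n) -> B,
                  is_alg_morph c one g -> g Z = z -> g X = x ->
                  forall v, g v = f v]),
      (exists u v, m u v != m v u) &
      exists (Delta : vec k (wI n) -> vec k (wI n * wI n)%type)
             (eps : vec k (wI n) -> k) (T : vec k (wI n) -> vec k (wI n)),
        [/\ is_weak_hopf c one Delta eps T,
            Delta Z = tens Z Z
                      + (a * (1 - q ^- 2)) *: tens (wmon k n n.+1 true) (m Z X)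
              /\ Delta X = tens X one + tens (wmon k n n false) X,
            eps Z = 1 /\ eps X = 0,
            [/\ (forall u v, T (m u v) = m (T v) (T u)), T one = one,
                T Z = wmon k n (n.*2.-1) false & T X = - wmon k n n true] &
            exists v, Delta v != [ffun p => Delta v (p.2, p.1)]]].
Proof.
have h1 : (1 < N)%N by lia.
have h0 : (0 < N)%N by lia.
have hnN : (n < N)%N by lia.
have ZX : smul c (wZ k n) (wX k n) = wmon k n 1 true.
  by rewrite /wZ /wX smulFT //; apply: wmon_congr0; bnd.
have XZ : smul c (wX k n) (wZ k n) = q ^- 1 *: wmon k n 1 true.
  by rewrite /wZ /wX smulTF //; apply: wmon_congr; [bnd | by rewrite expr1].
have hau : is_assoc_unital c (wone k n).
  by split; [exact: smul_assoc | exact: smul_one1 | exact: smul_one2].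
split => //.
- split; first exact: spowZ2.
  split; first by rewrite ZX XZ scalerA expr1 divff ?qneq0 // scale1r.
  by rewrite /wX smulTT.
- by move=> B z x hz hzx hx; exact: univ.
- exists (wZ k n), (wX k n); rewrite ZX XZ; apply/negP => /eqP/ffunP/(_ (w 1 true)).
  rewrite !ffunE eqxx [_ *: _]mulr1 => /esym/eqP; by rewrite (negbTE qneq1).
exists Delta, eps, T; split.
- split.
  + split => //.
    * split; first exact: hau.
      split; first exact: linext_lin.
      by move=> x u v; rewrite /eps gleD gleZ.
    * by move=> v i j l; exact: coassoc.
    * by split; [exact: counit_l | exact: counit_r].
    * split; first exact: Delta_mul.
      by rewrite /wone DeltaF // alpha0 scale0r addr0 !wmonE tens_bvec.
    * split; first exact: eps_mul.
      by rewrite /wone eps_w.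
  + exact: linext_lin.
  + exact: conv_TidT.
  + exact: conv_idTid.
- split.
  + rewrite ZX /wZ DeltaF // !wmonE !tens_bvec /alpha muln1.
    by have -> : zred n (1 + n) = n.+1 by bnd.
  + rewrite /wX /wone DeltaT // !wmonE !tens_bvec.
    by have -> : zred n (0 + n) = n by bnd.
- by rewrite /wZ /wX !eps_w.
- split.
  + exact: T_anti.
  + by rewrite /wone T_F.
  + by rewrite /wZ T_F //; apply: wmon_congr0; bnd.
  + rewrite /wX T_T //.
    have -> : texp 0 = 0%N by [].
    rewrite expr0 invr1 scaleN1r; congr (- _); apply: wmon_congr0; bnd.
exists (wX k n); apply/negP => /eqP/ffunP/(_ (w n false, w 0 true)).
rewrite ffunE /wX DeltaT //; cbn [fst snd].
rewrite !(vaddE, bvecE) !pe2 !weq //; try bnd.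
have -> : zred n (0 + n) = n by bnd.
rewrite !eqxx /=.
have -> : (n == 0%N) = false by apply/eqP; lia.
rewrite ?andFb ?andbF ?andFb /=.
by rewrite ?mulr0n ?add0r ?addr0 => /eqP; rewrite ?oner_eq0.
Qed.
End Wh.

Unset Implicit Arguments.
Set Strict Implicit.
Set Printing Implicit Defensive.

Theorem theorem3p1 (k : closedFieldType) (n : nat) (q a : k) :
  [pchar k] =i pred0 ->
  (0 < n)%N ->
  (n.*2).-primitive_root q ->
  a != 0 ->
  let c := @wmul k n q in
  let one := wone k n in
  let Z := wZ k n in
  let X := wX k n in
  let m := smul c in
  (* the concrete algebra is the algebra generated by Z, X with the relations
     Z^{2n+1} = Z, ZX = qXZ, X^2 = 0 (presentation via universal property) *)
  [/\ is_assoc_unital c one,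
      spow c one Z (n.*2.+1) = Z /\ m Z X = q *: m X Z /\ m X X = 0,
      (forall (B : algType k) (z x : B),
          z ^+ (n.*2.+1) = z -> z * x = q *: (x * z) -> x ^+ 2 = 0 ->
          exists f : vec k (wI n) -> B,
            [/\ is_alg_morph c one f, f Z = z, f X = x &
                forall g : vec k (wI n) -> B,
                  is_alg_morph c one g -> g Z = z -> g X = x ->
                  forall v, g v = f v]),
      (* noncommutative *)
      (exists u v, m u v != m v u) &
      (* weak Hopf structure with the prescribed Delta, eps, T *)
      exists (Delta : vec k (wI n) -> vec k (wI n * wI n)%type)
             (eps : vec k (wI n) -> k) (T : vec k (wI n) -> vec k (wI n)),
        [/\ is_weak_hopf c one Delta eps T,
            Delta Z = tens Z Z
                      + (a * (1 - q ^- 2)) *: tens (wmon k n n.+1 true) (m Z X)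
              /\ Delta X = tens X one + tens (wmon k n n false) X,
            eps Z = 1 /\ eps X = 0,
            [/\ (forall u v, T (m u v) = m (T v) (T u)), T one = one,
                T Z = wmon k n (n.*2.-1) false & T X = - wmon k n n true] &
            (* noncocommutative *)
            exists v, Delta v != [ffun p => Delta v (p.2, p.1)]]].
Proof.
move=> _ hn hq _.
exact: (@main_sec k n q a hn hq).
Qed.
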